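(* Let $P=(P_1,\dots,P_n)$ be a probability vector, let $\Delta>0$, and let $\gamma>0$ and $\delta>0$ satisfy $$\sum_{i=1}^n\min(\delta,\gamma P_i)=1\qquad\text{and}\qquad \sum_{i:\ \gamma P_i<\delta}P_i=1-\Delta.$$ Define the probability vector $Q^*$ by $Q^*_i=\min(\delta,\gamma P_i)$. Then every $\lambda>0$ with $\alpha_\lambda(P\Vert Q^* )=1-\Delta$ satisfies $\beta_\lambda(P\Vert Q^* )\ge 1-\Delta$.
   Context: For probability vectors $P,Q$ on $\{1,\dots,n\}$ and $\lambda>0$: $\alpha_\lambda(P\Vert Q)=\sum_i\min(\lambda P_i,Q_i)$ (Precision) and $\beta_\lambda(P\Vert Q)=\sum_i\min(P_i,Q_i/\lambda)$ (Recall). The vector $Q^*$ is the paper's candidate minimizer of the ''TruncR'' loss $-\sum_i P_i\mathbf 1_{\{Q_i<\delta\}}\log Q_i$ under the quantile constraint $\sum_{i:Q_i<\delta}P_i=1-\Delta$. *)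

(* Defs.v *)
From mathcomp Require Import all_boot all_order all_algebra.
Set Implicit Arguments. Unset Strict Implicit. Unset Printing Implicit Defensive.
Import Order.TTheory GRing.Theory Num.Theory.
Local Open Scope ring_scope.

Definition is_prob_vec (R : realFieldType) (n : nat) (P : 'I_n -> R) : Prop :=
  (forall i, 0 <= P i) /\ \sum_(i < n) P i = 1.

Definition alpha_pr (R : realFieldType) (n : nat) (lam : R) (P Q : 'I_n -> R) : R :=
  \sum_(i < n) Num.min (lam * P i) (Q i).

Definition beta_rc (R : realFieldType) (n : nat) (lam : R) (P Q : 'I_n -> R) : R :=
  \sum_(i < n) Num.min (P i) (Q i / lam).

Definition Qstar (R : realFieldType) (n : nat) (gam del : R) (P : 'I_n -> R) : 'I_n -> R :=
  fun i => Num.min del (gam * P i).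

(* Main.v *)
Require Import Defs.
From mathcomp Require Import all_boot all_order all_algebra.
Import Order.TTheory GRing.Theory Num.Theory.
Local Open Scope ring_scope.

Lemma min_divr (R : realFieldType) (a b l : R) : 0 < l ->
  Num.min a (b / l) = Num.min (l * a) b / l.
Proof.
move=> hl; have hl0 : l != 0 by rewrite gt_eqF.
case: (leP (l * a) b) => h.
- have : a <= b / l by rewrite ler_pdivlMr // mulrC.
  by move=> h'; rewrite (min_l h') mulrC mulKf.
- have : b / l < a by rewrite ltr_pdivrMr // mulrC.
  by move=> h'; rewrite (min_r (ltW h')).
Qed.

Theorem propositionB3 (R : realFieldType) (n : nat) (P : 'I_n -> R)
    (Delta gam del : R) :
  is_prob_vec P ->
  0 < Delta -> 0 < gam -> 0 < del ->
  \sum_(i < n) Num.min del (gam * P i) = 1 ->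
  \sum_(i < n | gam * P i < del) P i = 1 - Delta ->
  forall lam : R, 0 < lam ->
    alpha_pr lam P (Qstar gam del P) = 1 - Delta ->
    1 - Delta <= beta_rc lam P (Qstar gam del P).
Proof.
move=> [P0 P1] hD hg hd hQ hS lam hl ha.
have -> : beta_rc lam P (Qstar gam del P) = alpha_pr lam P (Qstar gam del P) / lam.
  rewrite /beta_rc /alpha_pr mulr_suml; apply: eq_bigr => i _.
  exact: min_divr.
rewrite ha.
have h0 : 0 <= 1 - Delta by rewrite -hS; apply: sumr_ge0 => i _.
have [hz|hpos] := eqVneq (1 - Delta) 0; first by rewrite hz mul0r.
have hp : 0 < 1 - Delta by rewrite lt_def hpos h0.
suff hl1' : lam <= 1.
  by rewrite ler_pdivlMr // ler_piMr.
rewrite leNgt; apply/negP => hl1.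
case: (ltP gam lam) => hgl.
- have : alpha_pr lam P (Qstar gam del P) = 1.
    rewrite -hQ /alpha_pr; apply: eq_bigr => i _; rewrite /Qstar.
    apply: min_r; rewrite ge_min; apply/orP; right.
    by apply: ler_wpM2r => //; apply: ltW.
  move=> h1; move: ha; rewrite h1 => h2.
  have hD' : Delta = 1 - (1 - Delta) by rewrite opprB addrC subrK.
  by move: hD; rewrite hD' -h2 subrr ltxx.
- have : lam * (1 - Delta) <= alpha_pr lam P (Qstar gam del P).
    rewrite /alpha_pr (bigID (fun i => gam * P i < del)) /= -hS mulr_sumr.
    rewrite -[X in X <= _]addr0; apply: lerD.
      apply: ler_sum => i hi; rewrite /Qstar (min_r (ltW hi)).
      by rewrite min_l // ler_wpM2r.
    apply: sumr_ge0 => i _; rewrite /Qstar le_min !le_min.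
    rewrite mulr_ge0 ?(ltW hl) ?(ltW hd) ?mulr_ge0 ?(ltW hg) //.
  rewrite ha => h.
  have : (1 - Delta) < lam * (1 - Delta) by rewrite -ltr_pdivrMr // divff ?gt_eqF.
  by rewrite ltNge h.
Qed.
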